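(* Let $G$ be a graph with an RDV representation on a rooted tree $T$, with node coordinates $x(\cdot),y(\cdot)$ defined as in the context, and let $v_1,\dots,v_n$ be a bottom-up enumeration of the vertices of $G$. Then for all $1\le i<j\le n$, $v_iv_j$ is an edge of $G$ if and only if the vertical segment $q(v_j)$ intersects the horizontal segment $s(v_i)$.
   Context: An RDV representation of a graph $G$ consists of a rooted tree $T$ (the host tree; its vertices are called nodes) and, for every vertex $v$ of $G$, a downward path $P(v)$ in $T$ (a path that starts at some node and then always proceeds from a node to one of its children), such that for distinct vertices $v,w$, $vw$ is an edge of $G$ if and only if $P(v)$ and $P(w)$ share at least one node. For a vertex $v$, $t(v)$ denotes the node of $P(v)$ closest to the root, and $b(v)$ the node of $P(v)$ farthest from the root. A bottom-up enumeration is an ordering of the vertices of $G$ by non-increasing distance of $t(v)$ from the root (ties broken arbitrarily). Coordinates: fix an arbitrary order of the children at each node of $T$, and number the leaves $L_1,\dots,L_\ell$ from left to right according to this order (i.e., in the order they are encountered by a depth-first traversal respecting the child orders). For a node $u$, let $\ell(u)$ and $r(u)$ be the leftmost (lowest-indexed) and rightmost (highest-indexed) leaf descendant of $u$ (a leaf is its own descendant); let $x(u)$ be the index of $\ell(u)$ and, for a leaf $L_k$, $x(L_k)=k$; let $y(u)$ be the distance (number of edges) from $u$ to the root. Node $u$ is associated with the point $(x(u),y(u))\in\mathbb{R}^2$. For a vertex $v$, the horizontal segment $s(v)$ is the segment from $(x(t(v)),y(t(v)))$ to $(x(r(t(v))),y(t(v)))$, and the vertical segment $q(v)$ is the segment from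 $(x(b(v)),y(b(v)))$ to $(x(b(v)),y(t(v)))$. *)

(* Defs.v *)
From mathcomp Require Import all_boot all_order all_algebra.
Set Implicit Arguments. Unset Strict Implicit. Unset Printing Implicit Defensive.
Import Order.TTheory GRing.Theory Num.Theory.

Definition rooted_tree (N : finType) (root : N) (par : N -> N) : Prop :=
  par root = root /\ forall u : N, exists k, iter k par u = root.

Section Tree.
Variables (N : finType) (root : N) (par : N -> N).

(* (in a rooted tree on N every ancestor is reached within #|N| - 1 steps) *)
Definition anc (a u : N) : bool := [exists k : 'I_#|N|, iter k par u == a].

Definition depth (u : N) : nat :=
  \big[minn/#|N|]_(k < #|N|.+1 | iter k par u == root) k.

Definition is_child (w u : N) : bool := (w != root) && (par w == u).
Definition is_leaf (u : N) : bool := [forall w, ~~ is_child w u].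

Definition sibling_order (ord : N -> nat) : Prop :=
  forall a b : N, a != root -> b != root -> a != b -> par a = par b ->
    ord a != ord b.

Variable ord : N -> nat.

(* leaf L1 is encountered before leaf L2 by a DFS respecting the child orders *)
Definition leaf_before (L1 L2 : N) : bool :=
  [exists a : N, exists b : N, [&& a != root, b != root, par a == par b,
                      ord a < ord b, anc a L1 & anc b L2]].

Definition leaf_index (L : N) : nat :=
  #|[set L' : N | is_leaf L' && leaf_before L' L]|.+1.

Definition xcoord (u : N) : nat :=
  \big[minn/#|N|.+1]_(L : N | is_leaf L && anc u L) leaf_index L.

Definition xright (u : N) : nat :=
  \max_(L : N | is_leaf L && anc u L) leaf_index L.

Definition ycoord (u : N) : nat := depth u.

End Tree.

Local Open Scope ring_scope.
Definition segment (R : realFieldType) (P Q : R * R) (p : R * R) : Prop :=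
  exists lam : R, 0 <= lam <= 1 /\
    p = (P.1 + lam * (Q.1 - P.1), P.2 + lam * (Q.2 - P.2)).

Section RDV.
Variables (N : finType) (root : N) (par : N -> N) (ord : N -> nat).
Variables (V : finType) (t b : V -> N).

Definition on_path (v : V) (u : N) : bool := anc par (t v) u && anc par u (b v).

Definition pt (R : realFieldType) (u : N) : R * R :=
  ((xcoord root par ord u)%:R, (ycoord root par u)%:R).

Definition hseg (R : realFieldType) (v : V) : R * R -> Prop :=
  segment (pt R (t v)) ((xright root par ord (t v))%:R, (ycoord root par (t v))%:R).

Definition vseg (R : realFieldType) (v : V) : R * R -> Prop :=
  segment (pt R (b v)) ((xcoord root par ord (b v))%:R, (ycoord root par (t v))%:R).

End RDV.

Definition rdv_rep (N : finType) (root : N) (par : N -> N)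
  (V : finType) (adj : rel V) (t b : V -> N) : Prop :=
  (forall v, anc par (t v) (b v)) /\
  (forall v w, v != w ->
     (adj v w <-> exists u, on_path par t b v u /\ on_path par t b w u)).

(* Main.v *)
Require Import Defs.
From mathcomp Require Import all_boot all_order all_algebra.
Import Order.TTheory GRing.Theory Num.Theory.
From mathcomp Require Import zify ring lra.
Set Implicit Arguments. Unset Strict Implicit.

Lemma bigmin_lb (I : finType) (P : pred I) (F : I -> nat) d i :
  P i -> \big[minn/d]_(j | P j) F j <= F i.
Proof.
move=> Pi; rewrite unlock /reducebig.
have : i \in index_enum I by rewrite mem_index_enum.
elim: (index_enum I) => [|x r IH] //=; rewrite in_cons => /orP [/eqP <-|ir].
  by rewrite Pi geq_minl.
case: (P x); last exact: IH.
by rewrite geq_min (IH ir) orbT.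
Qed.

Lemma bigmin_glb (I : finType) (P : pred I) (F : I -> nat) d m :
  (forall i, P i -> m <= F i) -> m <= d -> m <= \big[minn/d]_(j | P j) F j.
Proof.
move=> H Hd; apply: (big_ind (fun x => m <= x)) => //.
  by move=> x y hx hy; rewrite leq_min hx hy.
Qed.

Lemma bigmin_attained (I : finType) (P : pred I) (F : I -> nat) d i0 :
  P i0 -> (forall i, P i -> F i <= d) ->
  exists2 i, P i & \big[minn/d]_(j | P j) F j = F i.
Proof.
move=> Pi0 Hb.
have : (\big[minn/d]_(j | P j) F j = d) \/ exists2 i, P i & \big[minn/d]_(j | P j) F j = F i.
  rewrite unlock /reducebig.
  elim: (index_enum I) => [|x r IH] /=; first by left.
  case Px: (P x) => //.
  case: IH => [->|[i Pi ->]].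
    by right; exists x => //; apply/minn_idPl; apply: Hb.
  right; case: (leqP (F x) (F i)) => h.
    by exists x => //; apply/minn_idPl.
  by exists i => //; apply/minn_idPr; apply: ltnW.
case=> [E|//]; exists i0 => //.
apply/eqP; rewrite eqn_leq bigmin_lb // E Hb //.
Qed.

Lemma iter_root (N : finType) (root : N) (par : N -> N) k :
  par root = root -> iter k par root = root.
Proof. by move=> h; elim: k => //= k ->. Qed.

Lemma depth_spec (N : finType) (root : N) (par : N -> N) u :
  rooted_tree root par ->
  [/\ iter (depth root par u) par u = root,
      (forall k, iter k par u = root -> depth root par u <= k) &
      depth root par u < #|N|].
Proof.
case=> Hr Hall.
have exP : exists k, iter k par u == root by case: (Hall u) => k hk; exists k; apply/eqP.
case: (ex_minnP exP) => m /eqP Hm Hmin.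
have Hmlt : m < #|N|.
  have inj : injective (fun k : 'I_m.+1 => iter k par u).
    move=> i j /= hij; apply/eqP; rewrite -val_eqE /=; apply/negPn/negP => hne.
    wlog lt : i j hij hne / i < j.
      move=> W; case: (ltngtP i j) => h; first exact: (W i j).
      - by apply: (W j i) => //; rewrite eq_sym.
      - by move/eqP: hne; rewrite h.
    have hj : j <= m by rewrite -ltnS.
    have : iter (m - j + i) par u == root.
      by rewrite iterD hij -iterD subnK // Hm.
    move/Hmin; have := ltn_ord i; lia.
  by have := @leq_card _ _ _ inj; rewrite card_ord.
have Hle : depth root par u <= m.
  have hm : m < #|N|.+1 by apply: (leq_trans Hmlt).
  have := @bigmin_lb _ (fun k : 'I_#|N|.+1 => iter k par u == root) (fun k => val k) #|N| (Ordinal hm).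
  by rewrite /= Hm eqxx => /(_ isT).
have Hge : m <= depth root par u.
  apply: bigmin_glb; last exact: ltnW.
  by move=> i /Hmin.
have -> : depth root par u = m by apply/eqP; rewrite eqn_leq Hle Hge.
split => // k hk; apply: Hmin; exact/eqP.
Qed.


Lemma depth_root (N : finType) (root : N) (par : N -> N) :
  rooted_tree root par -> depth root par root = 0.
Proof.
move=> Ht; case: (depth_spec root Ht) => _ H _.
by apply/eqP; rewrite -leqn0; apply: H.
Qed.

Lemma depth_par (N : finType) (root : N) (par : N -> N) u :
  rooted_tree root par -> u != root -> depth root par u = (depth root par (par u)).+1.
Proof.
move=> Ht hu.
case: (depth_spec u Ht) => h1 h2 _; case: (depth_spec (par u) Ht) => h1' h2' _.
have a : depth root par u <= (depth root par (par u)).+1.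
  by apply: h2; rewrite iterSr; exact h1'.
have b : depth root par u != 0 by apply: contraNneq hu => e; rewrite e in h1; apply/eqP.
have c : depth root par (par u) <= (depth root par u).-1.
  by apply: h2'; rewrite -iterSr prednK ?lt0n.
move: a b c; lia.
Qed.

Lemma depth_iter (N : finType) (root : N) (par : N -> N) k u :
  rooted_tree root par -> k <= depth root par u ->
  depth root par (iter k par u) = depth root par u - k.
Proof.
move=> Ht; elim: k u => [|k IH] u hk; first by rewrite subn0.
have hu : u != root by apply: contraTneq hk => ->; rewrite depth_root.
have E := depth_par Ht hu.
rewrite E in hk *; rewrite iterSr IH //; lia.
Qed.

Lemma anc_norm (N : finType) (root : N) (par : N -> N) a u :
  rooted_tree root par -> (exists k, iter k par u = a) ->
  exists2 k, k <= depth root par u & iter k par u = a.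
Proof.
move=> Ht [k hk].
case: (leqP k (depth root par u)) => h; first by exists k.
exists (depth root par u) => //.
case: (depth_spec u Ht) => h1 _ _.
rewrite h1 -hk -(subnK (ltnW h)) iterD h1 iter_root //; by case: Ht.
Qed.

Lemma ancP (N : finType) (root : N) (par : N -> N) a u :
  rooted_tree root par -> anc par a u <-> exists k, iter k par u = a.
Proof.
move=> Ht; split.
  by case/existsP => k /eqP hk; exists k.
move/(anc_norm Ht) => [k hk1 hk2]; apply/existsP.
case: (depth_spec u Ht) => _ _ h3.
have hk : k < #|N| by apply: leq_ltn_trans h3.
by exists (Ordinal hk); apply/eqP.
Qed.

Lemma anc_depth (N : finType) (root : N) (par : N -> N) a u :
  rooted_tree root par -> anc par a u ->
  depth root par a <= depth root par u /\
  a = iter (depth root par u - depth root par a) par u.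
Proof.
move=> Ht /(ancP _ _ Ht) /(anc_norm Ht) [k hk <-].
rewrite depth_iter // leq_subr; split => //.
by rewrite subKn.
Qed.

Lemma anc_refl (N : finType) (root : N) (par : N -> N) a :
  rooted_tree root par -> anc par a a.
Proof. by move=> Ht; apply/(ancP _ _ Ht); exists 0. Qed.

Lemma anc_par (N : finType) (root : N) (par : N -> N) a :
  rooted_tree root par -> anc par (par a) a.
Proof. by move=> Ht; apply/(ancP _ _ Ht); exists 1. Qed.

Lemma anc_trans (N : finType) (root : N) (par : N -> N) a b c :
  rooted_tree root par -> anc par a b -> anc par b c -> anc par a c.
Proof.
move=> Ht /(ancP _ _ Ht) [k <-] /(ancP _ _ Ht) [l <-].
by apply/(ancP _ _ Ht); exists (k + l); rewrite iterD.
Qed.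

Lemma anc_chain (N : finType) (root : N) (par : N -> N) a c u :
  rooted_tree root par -> anc par a u -> anc par c u ->
  depth root par a <= depth root par c -> anc par a c.
Proof.
move=> Ht /(anc_depth Ht) [ha ea] /(anc_depth Ht) [hc ec] hac.
apply/(ancP _ _ Ht); exists (depth root par c - depth root par a).
set da := depth root par a in ha ea hac *; set dc := depth root par c in hc ec hac *.
set du := depth root par u in ha hc ea ec *.
rewrite [in LHS]ec -iterD [in RHS]ea; congr iter; clearbody da dc du; lia.
Qed.

Lemma anc_eq (N : finType) (root : N) (par : N -> N) a c u :
  rooted_tree root par -> anc par a u -> anc par c u ->
  depth root par a = depth root par c -> a = c.
Proof.
move=> Ht /(anc_depth Ht) [_ ea] /(anc_depth Ht) [_ ec] e.
by rewrite ea ec e.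
Qed.

Lemma child_toward (N : finType) (root : N) (par : N -> N) a u :
  rooted_tree root par -> anc par a u -> depth root par a < depth root par u ->
  exists c, [/\ c != root, par c = a, anc par c u & depth root par c = (depth root par a).+1].
Proof.
move=> Ht hau hlt; case: (anc_depth Ht hau) => _ ea.
set c := iter (depth root par u - (depth root par a).+1) par u.
have dc : depth root par c = (depth root par a).+1.
  by rewrite /c depth_iter ?leq_subr // subKn.
exists c; split => //.
- by apply/negP => /eqP E; move: dc; rewrite E (depth_root Ht).
- rewrite /c -iterS [RHS]ea; apply: (congr1 (fun k => iter k par u)); lia.
- by apply/(ancP _ _ Ht); exists (depth root par u - (depth root par a).+1).
Qed.

Lemma leaf_desc (N : finType) (root : N) (par : N -> N) L u :
  rooted_tree root par -> is_leaf root par L -> anc par L u -> u = L.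
Proof.
move=> Ht hL hLu; case: (anc_depth Ht hLu) => hd _.
case: (ltngtP (depth root par L) (depth root par u)) => h.
- case: (child_toward Ht hLu h) => c [cr pc _ _].
  by move/forallP: hL => /(_ c); rewrite /is_child cr pc eqxx.
- by move: hd; rewrite leqNgt h.
- by apply: (anc_eq Ht (anc_refl _ Ht) hLu); rewrite h.
Qed.

Lemma exists_leaf (N : finType) (root : N) (par : N -> N) u :
  rooted_tree root par -> exists L, is_leaf root par L && anc par u L.
Proof.
move=> Ht.
have h0 : 0 < #|[pred w | anc par u w]|.
  by apply/card_gt0P; exists u; rewrite inE (anc_refl _ Ht).
case: (eq_bigmax_cond (depth root par) h0) => w; rewrite inE => huw Em.
exists w; rewrite huw andbT; apply/forallP => c; apply/negP => /andP [cr /eqP pc].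
have huc : anc par u c by apply: (anc_trans Ht huw); rewrite -pc (anc_par _ Ht).
have := @leq_bigmax_cond _ (mem [pred w | anc par u w]) (depth root par) c huc.
by rewrite Em (depth_par Ht cr) pc ltnn.
Qed.

Lemma lbP (N : finType) (root : N) (par : N -> N) (ord : N -> nat) L1 L2 :
  leaf_before root par ord L1 L2 <->
  exists a b, [/\ a != root, b != root, par a = par b, ord a < ord b &
                  anc par a L1 /\ anc par b L2].
Proof.
split.
  case/existsP => a /existsP [b /and5P [h1 h2 /eqP h3 h4 /andP [h5 h6]]].
  by exists a, b.
case=> a [b [h1 h2 h3 h4 [h5 h6]]].
by apply/existsP; exists a; apply/existsP; exists b; rewrite h1 h2 h3 eqxx h4 h5 h6.
Qed.

Lemma sib_eq (N : finType) (root : N) (par : N -> N) a b L :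
  rooted_tree root par -> a != root -> b != root -> par a = par b ->
  anc par a L -> anc par b L -> a = b.
Proof.
move=> Ht ha hb hp haL hbL; apply: (anc_eq Ht haL hbL).
by rewrite (depth_par Ht ha) (depth_par Ht hb) hp.
Qed.

Lemma lb_irr (N : finType) (root : N) (par : N -> N) (ord : N -> nat) L :
  rooted_tree root par -> ~ leaf_before root par ord L L.
Proof.
move=> Ht /lbP [a [b [h1 h2 h3 h4 [h5 h6]]]].
by move: h4; rewrite (sib_eq Ht h1 h2 h3 h5 h6) ltnn.
Qed.

Lemma anc_par_of (N : finType) (root : N) (par : N -> N) a b L :
  rooted_tree root par -> anc par a L -> anc par b L ->
  depth root par a < depth root par b -> anc par a (par b).
Proof.
move=> Ht haL hbL hlt.
have hb : b != root by apply/negP => /eqP E; move: hlt; rewrite E (depth_root Ht).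
have hpL : anc par (par b) L := anc_trans Ht (anc_par _ Ht) hbL.
apply: (anc_chain Ht haL hpL); move: hlt; rewrite (depth_par Ht hb); lia.
Qed.

Lemma lb_trans (N : finType) (root : N) (par : N -> N) (ord : N -> nat) L' L L1 :
  rooted_tree root par -> leaf_before root par ord L' L ->
  leaf_before root par ord L L1 -> leaf_before root par ord L' L1.
Proof.
move=> Ht /lbP [a1 [b1 [h1 h2 h3 h4 [h5 h6]]]] /lbP [a2 [b2 [g1 g2 g3 g4 [g5 g6]]]].
apply/lbP.
case: (ltngtP (depth root par a2) (depth root par b1)) => hd.
- exists a2, b2; split => //; split => //.
  apply: (anc_trans Ht _ h5); apply: (anc_trans Ht _ (anc_par _ Ht)).
  by rewrite h3; apply: anc_par_of Ht g5 h6 hd.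
- exists a1, b1; split => //; split => //.
  apply: (anc_trans Ht _ g6); apply: (anc_trans Ht _ (anc_par _ Ht)).
  by rewrite -g3; apply: anc_par_of Ht h6 g5 hd.
- have E : a2 = b1 by apply: (anc_eq Ht g5 h6).
  subst a2; exists a1, b2; split => //; first by rewrite h3.
  exact: ltn_trans g4.
Qed.

Lemma lb_index (N : finType) (root : N) (par : N -> N) (ord : N -> nat) L1 L2 :
  rooted_tree root par -> is_leaf root par L1 -> leaf_before root par ord L1 L2 ->
  leaf_index root par ord L1 < leaf_index root par ord L2.
Proof.
move=> Ht hL h; rewrite /leaf_index ltnS; apply: proper_card.
apply/properP; split.
  apply/subsetP => x; rewrite !inE => /andP [-> hx] /=.
  exact: lb_trans Ht hx h.
exists L1; rewrite !inE hL //=.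
by apply/negP; apply: lb_irr Ht.
Qed.

Lemma leaf_index_le (N : finType) (root : N) (par : N -> N) (ord : N -> nat) L :
  rooted_tree root par -> leaf_index root par ord L <= #|N|.
Proof.
move=> Ht; rewrite /leaf_index.
suff : #|[set L' : N | is_leaf root par L' && leaf_before root par ord L' L]| < #|[set: N]|.
  by rewrite cardsT.
apply: proper_card; apply/properP; split; first exact: subsetT.
exists L; rewrite !inE //; apply/negP => /andP [_ /(lb_irr Ht)] //.
Qed.

Lemma anc_root (N : finType) (root : N) (par : N -> N) u :
  rooted_tree root par -> anc par root u.
Proof.
move=> Ht; apply/(ancP _ _ Ht); exists (depth root par u).
by case: (depth_spec u Ht).
Qed.

Lemma diverge (N : finType) (root : N) (par : N -> N) L u :
  rooted_tree root par -> is_leaf root par L -> ~~ anc par u L ->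
  exists a b, [/\ a != root, b != root, par a = par b, a != b &
                  anc par a L /\ anc par b u].
Proof.
move=> Ht hL hn.
pose A := [pred w | anc par w L && anc par w u].
have h0 : 0 < #|A| by apply/card_gt0P; exists root; rewrite inE /= !(anc_root _ Ht).
case: (eq_bigmax_cond (depth root par) h0) => w; rewrite inE => /andP [hwL hwu] Em.
have dwL : depth root par w < depth root par L.
  case: (anc_depth Ht hwL) => h _; rewrite ltn_neqAle h andbT; apply/negP => /eqP E.
  have wL : w = L by apply: (anc_eq Ht hwL (anc_refl _ Ht)).
  subst w; have := leaf_desc Ht hL hwu => E2; subst u.
  by rewrite (anc_refl _ Ht) in hn.
have dwu : depth root par w < depth root par u.
  case: (anc_depth Ht hwu) => h _; rewrite ltn_neqAle h andbT; apply/negP => /eqP E.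
  have wu : w = u by apply: (anc_eq Ht hwu (anc_refl _ Ht)).
  by subst w; rewrite hwL in hn.
case: (child_toward Ht hwL dwL) => a [ar pa aL da].
case: (child_toward Ht hwu dwu) => b [br pb bu db].
exists a, b; split => //; first by rewrite pa pb.
apply/negP => /eqP E; subst b.
have hA : A a by rewrite /A /= aL bu.
have := @leq_bigmax_cond _ (mem A) (depth root par) a hA.
by rewrite Em da ltnn.
Qed.

Lemma xcoord_spec (N : finType) (root : N) (par : N -> N) (ord : N -> nat) u :
  rooted_tree root par ->
  exists2 L, is_leaf root par L && anc par u L & xcoord root par ord u = leaf_index root par ord L.
Proof.
move=> Ht; case: (exists_leaf u Ht) => L0 h0.
case: (@bigmin_attained _ (fun L => is_leaf root par L && anc par u L)
   (leaf_index root par ord) #|N|.+1 L0 h0) => [i _|L hL E].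
  by apply: leq_trans (leaf_index_le _ _ Ht) _.
by exists L.
Qed.

Lemma xcoord_lb (N : finType) (root : N) (par : N -> N) (ord : N -> nat) u L :
  is_leaf root par L -> anc par u L -> xcoord root par ord u <= leaf_index root par ord L.
Proof.
move=> h1 h2; apply: (@bigmin_lb _ (fun L => is_leaf root par L && anc par u L)).
by rewrite h1.
Qed.

Lemma xright_spec (N : finType) (root : N) (par : N -> N) (ord : N -> nat) u :
  rooted_tree root par ->
  exists2 L, is_leaf root par L && anc par u L & xright root par ord u = leaf_index root par ord L.
Proof.
move=> Ht; case: (exists_leaf u Ht) => L0 h0.
have hc : 0 < #|[pred L | is_leaf root par L && anc par u L]|.
  by apply/card_gt0P; exists L0.
case: (eq_bigmax_cond (leaf_index root par ord) hc) => L hL E.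
by exists L => //; rewrite /xright -E.
Qed.

Lemma xright_ub (N : finType) (root : N) (par : N -> N) (ord : N -> nat) u L :
  is_leaf root par L -> anc par u L -> leaf_index root par ord L <= xright root par ord u.
Proof.
move=> h1 h2; apply: (@leq_bigmax_cond _ (fun L => is_leaf root par L && anc par u L)).
by rewrite h1.
Qed.

Lemma interval (N : finType) (root : N) (par : N -> N) (ord : N -> nat) u L :
  rooted_tree root par -> sibling_order root par ord -> is_leaf root par L ->
  xcoord root par ord u <= leaf_index root par ord L <= xright root par ord u ->
  anc par u L.
Proof.
move=> Ht Hs hL /andP [h1 h2]; case: (boolP (anc par u L)) => // hn.
case: (diverge Ht hL hn) => a [b [ar br pab ab [aL bu]]].
have := Hs a b ar br ab pab; rewrite neq_ltn => /orP [lt|lt].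
- case: (xcoord_spec ord u Ht) => L1 /andP [l1 uL1] E.
  have : leaf_before root par ord L L1.
    by apply/lbP; exists a, b; split => //; split => //; exact: anc_trans Ht bu uL1.
  move/(lb_index Ht hL); rewrite -E; move: h1; lia.
- case: (xright_spec ord u Ht) => L2 /andP [l2 uL2] E.
  have : leaf_before root par ord L2 L.
    by apply/lbP; exists b, a; split => //; split => //; exact: anc_trans Ht bu uL2.
  move/(lb_index Ht l2); rewrite -E; move: h2; lia.
Qed.

Local Open Scope ring_scope.


Lemma seg_in1 (R : realFieldType) (a b z : nat) :
  (a <= z <= b)%N -> exists lam : R, 0 <= lam <= 1 /\ z%:R = a%:R + lam * (b%:R - a%:R).
Proof.
move=> /andP [h1 h2].
have [eab|nab] := eqVneq a b.
  subst b; exists 0; rewrite lexx ler01; split => //.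
  have -> : z = a by apply/eqP; rewrite eqn_leq h1 h2.
  by rewrite mul0r addr0.
have hab : (a < b)%N by rewrite ltn_neqAle nab (leq_trans h1 h2).
have hd : (0 : R) < b%:R - a%:R by rewrite subr_gt0 ltr_nat.
exists ((z%:R - a%:R) / (b%:R - a%:R)); split.
  apply/andP; split.
    by apply: divr_ge0; [rewrite subr_ge0 ler_nat | exact: ltW].
  by rewrite ler_pdivrMr // mul1r lerD2r ler_nat.
by rewrite mulfVK ?gt_eqF //; ring.
Qed.

Lemma seg_in (R : realFieldType) (a b z : nat) :
  (a <= z <= b)%N || (b <= z <= a)%N ->
  exists lam : R, 0 <= lam <= 1 /\ z%:R = a%:R + lam * (b%:R - a%:R).
Proof.
case/orP => h; first exact: seg_in1.
case: (@seg_in1 R _ _ _ h) => mu [/andP [m0 m1] E]; exists (1 - mu); split.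
  by apply/andP; split; lra.
by rewrite E; ring.
Qed.

Lemma seg_out (R : realFieldType) (a b z : nat) (lam : R) :
  0 <= lam <= 1 -> z%:R = a%:R + lam * (b%:R - a%:R) ->
  (a <= z <= b)%N || (b <= z <= a)%N.
Proof.
move=> /andP [l0 l1] E.
case: (leqP a b) => hab.
  have hab' : (a%:R : R) <= b%:R by rewrite ler_nat.
  apply/orP; left; rewrite -(ler_nat R) -(ler_nat R z) E; apply/andP; split; nra.
have hab' : (b%:R : R) <= a%:R by rewrite ler_nat ltnW.
apply/orP; right; rewrite -(ler_nat R) -(ler_nat R z) E; apply/andP; split; nra.
Qed.

Theorem theorem2 (R : realFieldType)
  (N : finType) (root : N) (par : N -> N) (ord : N -> nat)
  (V : finType) (adj : rel V) (t b : V -> N) (n : nat) (e : 'I_n -> V) :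
  rooted_tree root par ->
  sibling_order root par ord ->
  (forall v w, adj v w = adj w v) -> (forall v, ~~ adj v v) ->
  rdv_rep root par adj t b ->
  bijective e ->
  (forall i j : 'I_n, (i < j)%N ->
     (depth root par (t (e j)) <= depth root par (t (e i)))%N) ->
  forall i j : 'I_n, (i < j)%N ->
    (adj (e i) (e j) <->
     exists p : R * R, @vseg N root par ord V t b R (e j) p /\ @hseg N root par ord V t R (e i) p).
Proof.
move=> Ht Hs Hsym Hirr [Hanc Hadj] Hbij Hdep i j ij.
have hd := Hdep i j ij.
have vw : e i != e j.
  apply/negP => /eqP /(bij_inj Hbij) E; move: ij; rewrite E ltnn.
  done.
move: hd vw; set v := e i; set w := e j => hd vw.
have htwB := anc_depth Ht (Hanc w).
rewrite /vseg /hseg /segment /pt /ycoord /=.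
split.
- move/(Hadj v w vw) => [u [/andP [h1 h2] /andP [h3 h4]]].
  have TB : anc par (t v) (b w) := anc_trans Ht h1 h4.
  have [dTB _] := anc_depth Ht TB.
  case: (xcoord_spec ord (b w) Ht) => L /andP [lL BL] EL.
  have TL : anc par (t v) L := anc_trans Ht TB BL.
  exists ((xcoord root par ord (b w))%:R, (depth root par (t v))%:R); split.
  + have hz : ((depth root par (b w) <= depth root par (t v) <= depth root par (t w))%N ||
             (depth root par (t w) <= depth root par (t v) <= depth root par (b w))%N).
      by rewrite hd dTB orbT.
    case: (seg_in R hz) => lam [hl E]; exists lam; split => //.
    by rewrite -E subrr mulr0 addr0.
  + have hz : ((xcoord root par ord (t v) <= xcoord root par ord (b w) <= xright root par ord (t v))%N ||
             (xright root par ord (t v) <= xcoord root par ord (b w) <= xcoord root par ord (t v))%N).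
      by rewrite EL xcoord_lb // xright_ub.
    case: (seg_in R hz) => lam [hl E]; exists lam; split => //.
    by rewrite -E subrr mulr0 addr0.
- case=> p [[lam [hl hp]] [mu [hm hq]]].
  have ex : (xcoord root par ord (b w))%:R = (xcoord root par ord (t v))%:R + mu *
      ((xright root par ord (t v))%:R - (xcoord root par ord (t v))%:R) :> R.
    by have := congr1 fst hq; rewrite hp /= => <-; rewrite subrr mulr0 addr0.
  have ey : (depth root par (t v))%:R = (depth root par (b w))%:R + lam *
      ((depth root par (t w))%:R - (depth root par (b w))%:R) :> R.
    by have := congr1 snd hq; rewrite hp /= => ->; rewrite subrr mulr0 addr0.
  have hx := seg_out hm ex; have hy := seg_out hl ey.
  case: (xcoord_spec ord (b w) Ht) => L /andP [lL BL] EL.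
  case: (xcoord_spec ord (t v) Ht) => L' /andP [lL' TL'] EL'.
  have xr := xright_ub ord lL' TL'.
  have TL : anc par (t v) L.
    apply: (interval Ht Hs lL); rewrite -EL; move: hx xr; rewrite EL'; lia.
  case: htwB => htwB _.
  have dTB : (depth root par (t v) <= depth root par (b w))%N by move: hy htwB hd; lia.
  have TB : anc par (t v) (b w) := anc_chain Ht TL BL dTB.
  have tT : anc par (t w) (t v) := anc_chain Ht (Hanc w) TB hd.
  apply/(Hadj v w vw); exists (t v); split; apply/andP; split => //.
  exact: (anc_refl _ Ht).
Qed.
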